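(* Let $\mathcal{A}>0$ be rational and let $t_1,t_2\in T_\mathcal{A}\cap(0,1)$. Define \[t_3=\left(\frac{\sqrt{t_2(1-t_1^2)}+\sqrt{t_1(1-t_2^2)}}{1+t_1t_2}\right)^2,\] with positive real square roots. Then $t_3$ is rational, $t_3\in T_\mathcal{A}$, and both $(1+t_1)(1+t_2)(1+t_3)$ and $(1-t_1)(1-t_2)(1-t_3)$ are squares of rational numbers.
   Context: $T_\mathcal{A}=\{t\in\mathbb Q:\ t(1-t^2)=\mathcal{A}r^2 \text{ for some } r\in\mathbb Q\}$. An element $t\in T_\mathcal{A}\cap(0,1)$ is the parameter of the rational right triangle with sides $(1-t^2,2t,1+t^2)$, whose area $t(1-t^2)$ equals $\mathcal{A}$ times a rational square. *)

(* Defs.v *)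
From HB Require Import structures.
From mathcomp Require Import all_boot all_order all_algebra.
Set Implicit Arguments. Unset Strict Implicit. Unset Printing Implicit Defensive.
Import Order.TTheory GRing.Theory Num.Theory.
Local Open Scope ring_scope.

Definition T_A (A t : rat) : Prop := exists r : rat, t * (1 - t ^+ 2) = A * r ^+ 2.

Definition is_rat_square (q : rat) : Prop := exists r : rat, q = r ^+ 2.

(* Main.v *)
Require Import Defs.
From HB Require Import structures.
From mathcomp Require Import all_boot all_order all_algebra.
From mathcomp Require Import ring lra.
Import Order.TTheory GRing.Theory Num.Theory.
Local Open Scope ring_scope.

Theorem mainTheorem7 (R : rcfType) (A t1 t2 : rat) (hA : 0 < A)
  (h1 : T_A A t1) (h1i : 0 < t1 < 1) (h2 : T_A A t2) (h2i : 0 < t2 < 1) :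
  let t3 : R :=
    ((Num.sqrt (ratr (t2 * (1 - t1 ^+ 2))) + Num.sqrt (ratr (t1 * (1 - t2 ^+ 2))))
       / ratr (1 + t1 * t2)) ^+ 2 in
  exists q : rat, [/\ t3 = ratr q, T_A A q,
    is_rat_square ((1 + t1) * (1 + t2) * (1 + q)) &
    is_rat_square ((1 - t1) * (1 - t2) * (1 - q))].
Proof.
move=> t3.
case: h1 => r1 e1; case: h2 => r2 e2.
case/andP: h1i => a1 b1; case/andP: h2i => a2 b2.
set x := t2 * (1 - t1 ^+ 2).
set y := t1 * (1 - t2 ^+ 2).
set s := A * `|r1 * r2|.
set D := 1 + t1 * t2.
set P := (1 + t1) * (1 + t2).
set Q := (1 - t1) * (1 - t2).
have hs0 : 0 <= s by rewrite /s mulr_ge0 // ltW.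
have hs2 : s ^+ 2 = x * y.
  rewrite /s exprMn real_normK ?num_real //.
  have -> : x * y = (t1 * (1 - t1 ^+ 2)) * (t2 * (1 - t2 ^+ 2)) by rewrite /x /y; ring.
  rewrite e1 e2; ring.
have p1 : 0 < 1 - t1 ^+ 2 by nra.
have p2 : 0 < 1 - t2 ^+ 2 by nra.
have hx0 : 0 < x by rewrite /x mulr_gt0.
have hy0 : 0 < y by rewrite /y mulr_gt0.
have hxn : x != 0 by rewrite gt_eqF.
have hDn : D != 0 by rewrite /D; apply/eqP; nra.
have hPn : P != 0 by rewrite /P; apply/eqP; nra.
have hQn : Q != 0 by rewrite /Q; apply/eqP; nra.
have h1n : 1 - t1 ^+ 2 != 0 by rewrite gt_eqF.
have hr2 : r2 != 0.
  apply/eqP => r20; move: e2; rewrite r20 expr0n /= mulr0 => e2; nra.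
have hAn : A != 0 by rewrite gt_eqF.
have hun : 1 - t2 ^+ 2 != 0 by rewrite gt_eqF.
have ht2n : t2 != 0 by rewrite gt_eqF.
set q := ((t1 + t2) * (1 - t1 * t2) + 2 * s) / D ^+ 2.
have n1p : 1 + t1 != 0 by apply/eqP; lra.
have n2p : 1 + t2 != 0 by apply/eqP; lra.
have n1m : 1 - t1 != 0 by apply/eqP; lra.
have n2m : 1 - t2 != 0 by apply/eqP; lra.
have t1n : t1 != 0 by rewrite gt_eqF.
have hq1 : q = (x + s) ^+ 2 / (x * D ^+ 2).
  apply/eqP; rewrite -subr_eq0 (_ : _ - _ = (x * y - s ^+ 2) / (x * D ^+ 2)).
    by rewrite hs2 subrr mul0r.
  move: hxn hDn; rewrite /q /x /y /D => hxn hDn; field.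
  by rewrite hDn h1n ht2n.
have hq2 : 1 + q = (P + s) ^+ 2 / (P * D ^+ 2).
  apply/eqP; rewrite -subr_eq0 (_ : _ - _ = (x * y - s ^+ 2) / (P * D ^+ 2)).
    by rewrite hs2 subrr mul0r.
  move: hDn; rewrite /q /x /y /D /P => hDn; field.
  by rewrite ?hDn ?n1p ?n2p.
have hq3 : 1 - q = (Q - s) ^+ 2 / (Q * D ^+ 2).
  apply/eqP; rewrite -subr_eq0 (_ : _ - _ = (x * y - s ^+ 2) / (Q * D ^+ 2)).
    by rewrite hs2 subrr mul0r.
  move: hDn; rewrite /q /x /y /D /Q => hDn; field.
  by rewrite ?hDn ?n1m ?n2m.
have hxPQ : x * P * Q = (1 - t1 ^+ 2) ^+ 2 * (A * r2 ^+ 2).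
  by rewrite -e2 /x /P /Q; ring.
exists q; split.
- rewrite /t3 -/x -/y -/D.
  have hxy : Num.sqrt (ratr x) * Num.sqrt (ratr y) = ratr s :> R.
    rewrite -sqrtrM ?ler0q ?ltW // -rmorphM -hs2 rmorphXn sqrtr_sqr ger0_norm //.
    by rewrite ler0q.
  rewrite expr_div_n sqrrD !sqr_sqrtr ?ler0q ?ltW // hxy.
  rewrite (_ : q = (x + s *+ 2 + y) / D ^+ 2).
    by rewrite fmorph_div !rmorphD rmorphXn mulr2n /D !rmorphD.
  move: hDn; rewrite /q /x /y /D => hDn; field.
  by rewrite ?hDn.
- exists ((x + s) * (Q - s) * (P + s) / (D ^+ 3 * (1 - t1 ^+ 2) * A * r2)).
  rewrite (_ : 1 - q ^+ 2 = (1 - q) * (1 + q)); last by ring.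
  rewrite hq3 hq2 hq1.
  rewrite (_ : _ * _ = ((x + s) * (Q - s) * (P + s)) ^+ 2 / (x * P * Q * D ^+ 6)); last first.
    field.
    by rewrite ?hDn ?hxn ?hPn ?hQn.
  rewrite hxPQ; field.
  by rewrite ?hDn ?h1n ?hAn ?hr2.
- exists ((P + s) / D); rewrite hq2; field.
  by rewrite ?hDn ?hPn.
- exists ((Q - s) / D); rewrite hq3; field.
  by rewrite ?hDn ?hQn.
Qed.
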